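(* Let $F_1(v)=\frac{1-e^{-v}}{v}$ for real $v\ne0$ and $F_1(0)=1$, and for $j\in\mathbb{N}$ let $G_j(v)=\frac{v^j}{1-e^{-v}}$ for $v\ne0$, $G_j(0)=1$ if $j=1$ and $G_j(0)=0$ if $j>1$; let $f_j=G_j^{(j)}$. For $j\in\mathbb{N}$ and $k\ge0$, \[ G_j^{(k)}(v)=\frac{(-1)^k}{F_1^{k+1}(v)}\det M_{k}(v), \] where $M_k(v)=(m_{i,\ell})_{1\le i,\ell\le k+1}$ is the $(k+1)\times(k+1)$ matrix with first column $m_{i,1}=\langle j-1\rangle_{i-1}v^{j-i}$ ($1\le i\le k+1$) and, for $2\le\ell\le k+1$, $m_{i,\ell}=\binom{i-1}{\ell-2}F_1^{(i-\ell+1)}(v)$ if $i\ge \ell-1$ and $m_{i,\ell}=0$ if $i<\ell-1$. That is, the rows are $(\langle j-1\rangle_0 v^{j-1}, F_1, 0,\dots,0)$, $(\langle j-1\rangle_1 v^{j-2}, F_1', F_1,0,\dots,0)$, $\dots$, $(\langle j-1\rangle_k v^{j-k-1}, F_1^{(k)}, \binom{k}{1}F_1^{(k-1)},\dots,\binom{k}{k-1}F_1')$. In particular, $f_j(v)=\frac{(-1)^j}{F_1^{j+1}(v)}\det M_j(v)$ (whose first column is $(\langle j-1\rangle_0v^{j-1},\dots,\langle j-1\rangle_{j-2}v,(j-1)!,0)^T$), $G_j^{(k)}(0)=0$ for $0\le k<j-1$, and $G_j^{(j-1)}(0)=(j-1)!$, $G_j^{(j)}(0)=f_j(0)=\frac{j!}{2}$,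 $G_j^{(j+1)}(0)=f_j'(0)=\frac{(j+1)!}{12}$, $G_j^{(j+2)}(0)=0$.
   Context: $\mathbb{N}=\{1,2,3,\dots\}$. The falling factorial is $\langle x\rangle_n=x(x-1)\cdots(x-n+1)$ for $n\ge1$, $\langle x\rangle_0=1$; note $\langle j-1\rangle_{n}=0$ for integers $n\ge j$, and entries $\langle j-1\rangle_{i-1}v^{j-i}$ with $i-1\ge j$ are understood to be $0$ (also at $v=0$). $F_1$ and $G_j$ are real-analytic on $(-2\pi,2\pi)$ and $F_1$ has no real zeros. *)

(* Defs.v *)
From HB Require Import structures.
From mathcomp Require Import all_boot all_order all_algebra.
From mathcomp Require Import all_classical all_reals all_analysis.
Set Implicit Arguments. Unset Strict Implicit. Unset Printing Implicit Defensive.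
Import Order.TTheory GRing.Theory Num.Theory.
Local Open Scope ring_scope.

Definition F1 (R : realType) (v : R) : R :=
  if v == 0 then 1 else (1 - expR (- v)) / v.

Definition G (R : realType) (j : nat) (v : R) : R :=
  if v == 0 then (if j == 1%N then 1 else 0)
  else v ^+ j / (1 - expR (- v)).

Definition fj (R : realType) (j : nat) : R -> R := derive1n j (@G R j).

(* The (k+1)x(k+1) matrix M_k(v) (depending on j), with 0-based indices
   i, l : 'I_(k+1) corresponding to the paper's i+1, l+1.
   First column: <j-1>_i v^(j-1-i)  (the nat falling factorial (j-1)^_i
   vanishes when i >= j, so the truncated exponent is harmless). *)
Definition Mk (R : realType) (j k : nat) (v : R) : 'M[R]_(k.+1) :=
  \matrix_(i < k.+1, l < k.+1)
    if (l == 0 :> nat) then ((j.-1) ^_ i)%:R * v ^+ (j.-1 - i)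
    else if (l.-1 <= i)%N then ('C(i, l.-1))%:R * derive1n (i.+1 - l) (@F1 R) v
    else 0.

(* Main.v *)
Require Import Defs.
From HB Require Import structures.
From mathcomp Require Import all_boot all_order all_algebra.
From mathcomp Require Import all_classical all_reals all_analysis.
From mathcomp Require Import ring lra.
Import Order.TTheory GRing.Theory Num.Theory.
Import numFieldNormedType.Exports.
Local Open Scope classical_set_scope.
Local Open Scope ring_scope.
Set Implicit Arguments. Unset Strict Implicit.

Section F1series.
Variable R : realType.

Definition dco (m n : nat) : R := (-1) ^+ (n + m) / ((n`!)%:R * (n + m).+1%:R).
Definition Ps (m : nat) (x : R) : R := limn (pseries (dco m) x).

Lemma dco_diffs m : pseries_diffs (dco m) = dco m.+1.
Proof.
apply/funext => n; rewrite /pseries_diffs /dco.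
rewrite addSn addnS factS natrM.
field.
have H1 : (0:R) <= n%:R by apply: ler0n.
have H2 : (0:R) <= m%:R by apply: ler0n.
rewrite pnatr_eq0 gtn_eqF ?fact_gt0 //.
by apply/andP; split; apply/negP => /eqP; lra.
Qed.

Lemma cvg_Ps m x : cvgn (pseries (dco m) x).
Proof.
apply: normed_cvg.
apply: (@series_le_cvg _ _ (exp_coeff `|x|)).
- by move=> n; apply: normr_ge0.
- by move=> n; apply: exp_coeff_ge0.
- move=> n; rewrite /exp_coeff /= /dco.
  suff -> : `|(-1) ^+ (n + m) / (n`!%:R * (n + m).+1%:R) * x ^+ n| =
     (`|x| ^+ n / n`!%:R) / (n + m).+1%:R :> R.
    by rewrite ler_pdivrMr ?ltr0Sn // ler_peMr // ?divr_ge0 // ?ler1n.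
  rewrite normrM normrX normrM normfV normrX normrN normr1 expr1n mul1r.
  rewrite (ger0_norm (_ : 0 <= n`!%:R * _)) ?mulr_ge0 // invfM.
  by rewrite mulrC mulrA.
- exact: (is_cvg_series_exp_coeff `|x|).
Qed.

Lemma Ps_derive m (x : R) : is_derive x (1:R) (Ps m) (Ps m.+1 x).
Proof.
rewrite /Ps -dco_diffs.
apply: (@pseries_snd_diffs _ _ (`|x| + 1)); rewrite ?dco_diffs; try exact: cvg_Ps.
by rewrite [X in _ < X]ger0_norm ?addr_ge0 // ltrDl.
Qed.

Lemma Ps0 m : Ps m 0 = dco m 0.
Proof.
apply: lim_near_cst => //; near=> k; rewrite -[k]prednK; last by near: k.
rewrite /pseries /series /= big_nat_recl // expr0 mulr1 big1 ?addr0 // => i _.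
by rewrite expr0n mulr0.
Unshelve. all: by end_near. Qed.

Lemma expR_Ps v : expR (- v) = 1 - v * Ps 0 v.
Proof.
have E : forall n, series (exp_coeff (-v)) n.+1 = 1 - v * pseries (dco 0) v n.
  move=> n; rewrite /series /= big_nat_recl // /exp_coeff /= expr0 fact0 divr1.
  rewrite mulr_sumr -sumrN; congr (_ + _); apply: eq_bigr => i _.
  rewrite /dco /= addn0 -[-v]mulN1r exprMn exprS factS natrM.
  have H1 : (0:R) <= i%:R by apply: ler0n.
  rewrite exprS -natr1. field.
  rewrite pnatr_eq0 gtn_eqF ?fact_gt0 //.
  by rewrite andbT; apply/negP => /eqP; lra.
have C : series (exp_coeff (-v)) @ \oo --> 1 - v * Ps 0 v.
  rewrite -cvg_shiftS.
  have -> : [sequence series (exp_coeff (-v)) n.+1]_n = (fun n => 1 - v * pseries (dco 0) v n).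
    by apply/funext => n; rewrite /= E.
  apply: cvgB; first exact: cvg_cst.
  apply: cvgM; first exact: cvg_cst.
  exact: cvg_Ps.
exact: cvg_lim C.
Qed.


Lemma F1_Ps : @F1 R = Ps 0.
Proof.
apply/funext => v; rewrite /F1; case: eqP => [->|/eqP v0].
  by rewrite Ps0 /dco addn0 fact0 expr0; field.
by rewrite expR_Ps; field.
Qed.

Lemma derive1n_F1 m : derive1n m (@F1 R) = Ps m.
Proof.
elim: m => [|m IH]; first by rewrite F1_Ps.
rewrite derive1nS IH; apply/funext => x.
by rewrite derive1E; case: (Ps_derive m x) => _ ->.
Qed.

Lemma derivable_F1 m x : derivable (derive1n m (@F1 R)) x 1.
Proof. by rewrite derive1n_F1; case: (Ps_derive m x). Qed.

Lemma F1_neq0 v : @F1 R v != 0.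
Proof.
rewrite /F1; case: (eqVneq v 0) => [_|v0]; first by rewrite /= oner_eq0.
rewrite /= mulf_neq0 ?invr_eq0 // subr_eq0 eq_sym.
apply/negP => /eqP E.
have : expR (- v) = expR 0 by rewrite E expR0.
by move/expR_inj/eqP; rewrite oppr_eq0 (negbTE v0).
Qed.

Lemma F1n0 m : derive1n m (@F1 R) 0 = (-1) ^+ m / m.+1%:R.
Proof. by rewrite derive1n_F1 Ps0 /dco add0n fact0 mul1r. Qed.

End F1series.

Section Smooth.
Variable R : realType.
Implicit Types f g : R -> R.

Definition smooth f := forall n (x : R), derivable (derive1n n f) x 1.

Lemma smoothS f : smooth f -> smooth (derive1 f).
Proof. by move=> sf n x; rewrite -derive1Sn; apply: sf. Qed.

Lemma derive1D f g : (forall x, derivable f x 1) -> (forall x, derivable g x 1) ->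
  derive1 (fun x => f x + g x) = fun x => derive1 f x + derive1 g x.
Proof.
move=> df dg; apply/funext => x; rewrite !derive1E.
exact: (deriveD (df x) (dg x)).
Qed.

Lemma derive1N f : (forall x, derivable f x 1) ->
  derive1 (fun x => - f x) = fun x => - derive1 f x.
Proof.
move=> df; apply/funext => x; rewrite !derive1E.
exact: (deriveN (df x)).
Qed.

Lemma derive1M f g : (forall x, derivable f x 1) -> (forall x, derivable g x 1) ->
  derive1 (fun x => f x * g x) = fun x => derive1 f x * g x + f x * derive1 g x.
Proof.
move=> df dg; apply/funext => x; rewrite !derive1E.
rewrite (deriveM (df x) (dg x)) addrC.
by rewrite /GRing.scale /= mulrC [_ * 'D_1 g x]mulrC.
Qed.

Lemma derive1V f : (forall x, f x != 0) -> (forall x, derivable f x 1) ->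
  derive1 (fun x => (f x)^-1) = fun x => - (derive1 f x * ((f x)^-1 * (f x)^-1)).
Proof.
move=> f0 df; apply/funext => x; rewrite !derive1E.
rewrite (deriveV (f0 x) (df x)).
by rewrite /GRing.scale /= expr2 invfM mulrC mulrN.
Qed.

Lemma derivableD' f g x : derivable f x 1 -> derivable g x 1 ->
  derivable (fun x => f x + g x) x 1.
Proof. move=> df dg; exact: (derivableD df dg). Qed.

Lemma derivableN' f x : derivable f x 1 -> derivable (fun x => - f x) x 1.
Proof. move=> df; exact: (derivableN df). Qed.

Lemma derivableM' f g x : derivable f x 1 -> derivable g x 1 ->
  derivable (fun x => f x * g x) x 1.
Proof. move=> df dg; exact: (derivableM df dg). Qed.

Lemma derivableV' f x : f x != 0 -> derivable f x 1 ->
  derivable (fun x => (f x)^-1) x 1.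
Proof. move=> f0 df; exact: (derivableV f0 df). Qed.

Fixpoint Cn (n : nat) f : Prop :=
  if n is k.+1 then (forall x, derivable f x 1) /\ Cn k (derive1 f) else True.

Lemma Cn_smooth f : (forall n, Cn n f) -> smooth f.
Proof.
move=> H n; elim: n f H => [|n IH] f H x.
  by case: (H 1%N).
rewrite derive1Sn; apply: IH => k.
by case: (H k.+1).
Qed.

Lemma smooth_Cn f : smooth f -> forall n, Cn n f.
Proof.
move=> sf n; elim: n f sf => [//|n IH] f sf /=; split.
  exact: (sf 0%N).
by apply: IH; apply: smoothS.
Qed.

Lemma CnW n f : Cn n.+1 f -> Cn n f.
Proof.
elim: n f => [//|n IH] f /= [df H]; split => //.
exact: IH.
Qed.

Lemma CnD n f g : Cn n f -> Cn n g -> Cn n (fun x => f x + g x).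
Proof.
elim: n f g => [//|n IH] f g /= [df Hf] [dg Hg]; split.
  by move=> x; apply: derivableD'.
by rewrite derive1D //; apply: IH.
Qed.

Lemma CnN n f : Cn n f -> Cn n (fun x => - f x).
Proof.
elim: n f => [//|n IH] f /= [df Hf]; split.
  by move=> x; apply: derivableN'.
by rewrite derive1N //; apply: IH.
Qed.

Lemma CnM n f g : Cn n f -> Cn n g -> Cn n (fun x => f x * g x).
Proof.
elim: n f g => [//|n IH] f g Hf Hg.
have Hf' := CnW Hf; have Hg' := CnW Hg.
case: Hf => df Hf; case: Hg => dg Hg; split.
  by move=> x; apply: derivableM'.
by rewrite derive1M //; apply: CnD; apply: IH.
Qed.

Lemma CnV n f : (forall x, f x != 0) -> Cn n f -> Cn n (fun x => (f x)^-1).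
Proof.
move=> f0; elim: n f f0 => [//|n IH] f f0 Hf.
have Hf' := CnW Hf; case: Hf => df Hf; split.
  by move=> x; apply: derivableV'.
rewrite derive1V //; apply: CnN; apply: CnM => //.
by apply: CnM; apply: IH.
Qed.

Lemma smoothM f g : smooth f -> smooth g -> smooth (fun x => f x * g x).
Proof.
move=> sf sg; apply: Cn_smooth => n.
by apply: CnM; apply: smooth_Cn.
Qed.

Lemma smoothV f : (forall x, f x != 0) -> smooth f -> smooth (fun x => (f x)^-1).
Proof.
move=> f0 sf; apply: Cn_smooth => n.
by apply: CnV => //; apply: smooth_Cn.
Qed.

Lemma smoothD f g : smooth f -> smooth g -> smooth (fun x => f x + g x).
Proof.
move=> sf sg; apply: Cn_smooth => n.
by apply: CnD; apply: smooth_Cn.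
Qed.

Lemma derivable_smooth f : smooth f -> forall x, derivable f x 1.
Proof. by move=> sf x; apply: (sf 0%N). Qed.

Lemma derive1nD k f g : smooth f -> smooth g ->
  derive1n k (fun x => f x + g x) = fun x => derive1n k f x + derive1n k g x.
Proof.
elim: k f g => [//|k IH] f g sf sg.
rewrite derive1Sn derive1D; try exact: derivable_smooth.
rewrite IH; try exact: smoothS.
by apply/funext => x; rewrite -!derive1Sn.
Qed.


Lemma leibniz k N f g : smooth f -> smooth g -> (k < N)%N -> forall x,
  derive1n k (fun x => f x * g x) x =
  \sum_(m < N) 'C(k, m)%:R * (derive1n m f x * derive1n (k - m) g x).
Proof.
elim: k N f g => [|k IH] N f g sf sg kN x.
  case: N kN => [//|N] _; rewrite big_ord_recl /= big1 ?addr0 ?mul1r //.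
  by move=> i _; rewrite bin0n /= mul0r.
case: N kN => [//|N] kN.
rewrite derive1Sn derive1M; try exact: derivable_smooth.
rewrite derive1nD; try (apply: smoothM => //; exact: smoothS).
rewrite (IH N.+1 (derive1 f) g) ?(smoothS sf) //; last exact: ltnW.
rewrite (IH N.+1 f (derive1 g)) ?(smoothS sg) //; last exact: ltnW.
rewrite [in RHS]big_ord_recl [X in X + _ = _]big_ord_recr /=.
rewrite (bin_small (_ : k < N)%N) // mul0r addr0.
rewrite [X in _ + X = _]big_ord_recl /= !bin0 !subn0 !mul1r.
rewrite addrCA -derive1Sn -derive1nS; congr (_ + _).
rewrite -big_split /=; apply: eq_bigr => i _.
rewrite /bump leq0n add1n add0n subSS binS natrD mulrDl -!derive1Sn -!derive1nS addrC; congr (_ + _).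
case: (ltnP i k) => ik.
  by rewrite -subSn.
by rewrite bin_small ?mul0r // ltnS.
all: by apply: smoothS.
Qed.

End Smooth.

Section Cramer.
Variable R : realType.

Lemma cramer (k : nat) (F a hh : nat -> R) :
  F 0%N != 0 ->
  (forall i, (i <= k)%N -> hh i = \sum_(m < k.+1) 'C(i, m)%:R * (a m * F (i - m)%N)) ->
  a k = (-1) ^+ k / (F 0%N) ^+ k.+1 *
     \det (\matrix_(i < k.+1, l < k.+1)
       if (l == 0 :> nat) then hh i
       else if (l.-1 <= i)%N then ('C(i, l.-1))%:R * F (i.+1 - l)%N else 0).
Proof.
move=> F0 Hh.
set M := \matrix_(i < k.+1, l < k.+1) _.
pose N : 'M[R]_k.+1 := \matrix_(r, c) (if ((c : nat) == 0%N) && (0 < r)%N then - a r.-1 else 0).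
pose E : 'M[R]_k.+1 := 1%:M + N.
have detE : \det E = 1.
  rewrite det_trig; last first.
    apply/is_trig_mxP => i l il; rewrite /E /N !mxE.
    rewrite (_ : (i == l) = false); last by apply/negbTE; rewrite neq_ltn il.
    by rewrite (_ : (l : nat) == 0%N = false) ?add0r // gtn_eqF // (leq_ltn_trans _ il).
  rewrite big1 // => i _; rewrite /E /N !mxE eqxx /=.
  by case: (i : nat) => [|n] /=; rewrite addr0.
have Mcol : forall i (l : 'I_k.+1), (l : nat) != 0%N -> (M *m E) i l = M i l.
  move=> i l l0; rewrite /E mulmxDr mulmx1 mxE.
  rewrite [X in _ + X]mxE big1 ?addr0 // => r _.
  by rewrite /N !mxE (negbTE l0) /= mulr0.
have ME : forall i : 'I_k.+1, (M *m E) i ord0 = 'C(i, k)%:R * (a k * F (i - k)%N).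
  move=> i; rewrite /E mulmxDr mulmx1 mxE [X in _ + X]mxE big_ord_recl.
  rewrite [N ord0 ord0]mxE /= mulr0 add0r [M i ord0]mxE /=.
  rewrite (Hh _ (ltn_ord i)) big_ord_recr /= -addrA addrC -addrA.
  rewrite [X in _ + X](_ : _ = 0) ?addr0 //.
  rewrite -big_split big1 // => r _ /=.
  rewrite !mxE !lift0 /= subSS.
  case: leqP => ri.
    ring.
  by rewrite bin_small // !mul0r add0r.
have Xent : forall i l : 'I_k,
    row' ord_max (col' ord0 (M *m E)) i l =
    if (l <= i)%N then 'C(i, l)%:R * F (i - l)%N else 0.
  move=> i l; rewrite [LHS]mxE [LHS]mxE Mcol ?lift0 // /M mxE lift0 lift_max /=.
  by rewrite subSS.
have detX : \det (row' ord_max (col' ord0 (M *m E))) = F 0%N ^+ k.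
  rewrite det_trig; last first.
    apply/is_trig_mxP => i l il; rewrite Xent.
    by rewrite leqNgt il.
  rewrite (eq_bigr (fun _ => F 0%N)) ?prodr_const ?card_ord // => i _.
  by rewrite Xent leqnn binn subnn mul1r.
have -> : \det M = \det (M *m E) by rewrite det_mulmx detE mulr1.
rewrite (expand_det_col _ ord0) big_ord_recr /= big1; last first.
  move=> i _; rewrite ME bin_small ?mul0r //.
  by rewrite /= ltn_ord.
rewrite add0r ME /cofactor detX /= binn subnn mul1r addn0.
have ss : (-1) ^+ k * (-1) ^+ k = 1 :> R.
  by rewrite -exprD addnn -mul2n exprM expr2 mulrNN mulr1 expr1n.
have Fk : F 0%N ^+ k != 0 by rewrite expf_neq0.
rewrite exprS.
transitivity (a k * ((-1) ^+ k * (-1) ^+ k) * ((F 0%N * F 0%N ^+ k) / (F 0%N * F 0%N ^+ k))).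
  by rewrite ss mulfV ?mulr1 // mulf_neq0.
by field; rewrite Fk F0.
Qed.
End Cramer.


Section Main.
Variable R : realType.

Lemma derive1n_pow (p i : nat) :
  derive1n i (fun x : R => x ^+ p) = fun x => (p ^_ i)%:R * x ^+ (p - i).
Proof.
elim: i => [|i IH].
  by apply/funext => x; rewrite /= ffactn0 mul1r subn0.
rewrite derive1nS IH; apply/funext => x.
rewrite derive1Ml; last exact: exprn_derivable.
rewrite exp_derive1 ffactnSr natrM subnS /GRing.scale /=.
by rewrite mulrA.
Qed.

Lemma smooth_pow (p : nat) : smooth (fun x : R => x ^+ p).
Proof.
move=> n x; rewrite derive1n_pow.
apply: derivableM'; first exact: derivable_cst.
exact: exprn_derivable.
Qed.

Lemma smooth_F1 : smooth (@F1 R).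
Proof. by move=> n x; apply: derivable_F1. Qed.

Lemma G_eq (j : nat) : (1 <= j)%N -> @G R j = fun x => x ^+ j.-1 * (F1 x)^-1.
Proof.
case: j => [//|p] _; apply/funext => x; rewrite /G /F1 /=.
case: (eqVneq x 0) => [->|x0] /=.
  by rewrite invr1 mulr1 expr0n; case: p.
by rewrite invf_div mulrA -exprSr.
Qed.

Lemma smooth_G (j : nat) : (1 <= j)%N -> smooth (@G R j).
Proof.
move=> hj; rewrite G_eq //; apply: smoothM; first exact: smooth_pow.
apply: smoothV; [exact: F1_neq0 | exact: smooth_F1].
Qed.

Lemma GF1 (j : nat) : (1 <= j)%N -> (fun x => @G R j x * F1 x) = fun x => x ^+ j.-1.
Proof.
move=> hj; rewrite G_eq //; apply/funext => x.
by rewrite mulfVK // F1_neq0.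
Qed.

Lemma recG (j : nat) (hj : (1 <= j)%N) N i (x : R) : (i < N)%N ->
  (j.-1 ^_ i)%:R * x ^+ (j.-1 - i) =
  \sum_(m < N) 'C(i, m)%:R * (derive1n m (@G R j) x * derive1n (i - m) (@F1 R) x).
Proof.
move=> iN.
rewrite -(leibniz (smooth_G hj) smooth_F1 iN) GF1 //.
by rewrite derive1n_pow.
Qed.


Lemma Cnat n m : (m <= n)%N ->
  'C(n, m)%:R = n`!%:R / (m`!%:R * (n - m)`!%:R) :> R.
Proof.
by move=> mn; rewrite -(bin_fact mn) !natrM mulfK // mulf_neq0 // pnatr_eq0 -lt0n fact_gt0.
Qed.

End Main.

Unset Implicit Arguments.

Theorem theorem5p1 (R : realType) (j : nat) (hj : (1 <= j)%N) :
  (forall (k : nat) (v : R),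
      derive1n k (@G R j) v = (-1) ^+ k / (F1 v) ^+ k.+1 * \det (Mk j k v))
  /\ (forall v : R, @fj R j v = (-1) ^+ j / (F1 v) ^+ j.+1 * \det (Mk j j v))
  /\ (forall k : nat, (k < j.-1)%N -> derive1n k (@G R j) 0 = 0)
  /\ derive1n j.-1 (@G R j) 0 = (j.-1)`!%:R
  /\ derive1n j (@G R j) 0 = (j`!)%:R / 2
  /\ @fj R j 0 = (j`!)%:R / 2
  /\ derive1n j.+1 (@G R j) 0 = (j.+1)`!%:R / 12
  /\ derive1 (@fj R j) 0 = (j.+1)`!%:R / 12
  /\ derive1n j.+2 (@G R j) 0 = 0.
Proof.
have P1 : forall (k : nat) (v : R),
    derive1n k (@G R j) v = (-1) ^+ k / (F1 v) ^+ k.+1 * \det (Mk j k v).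
  move=> k v; rewrite /Mk.
  apply: (@cramer R k (fun n => derive1n n (@F1 R) v) (fun m => derive1n m (@G R j) v)
     (fun i => ((j.-1) ^_ i)%:R * v ^+ (j.-1 - i))).
    exact: F1_neq0.
  move=> i ik; exact: (recG hj).
split => //.
split; first by move=> v; rewrite /fj P1.
rewrite /fj -derive1nS.
set a := fun m => derive1n m (@G R j) 0.
have Fz : forall n, derive1n n (@F1 R) 0 = (-1) ^+ n / n.+1%:R by move=> n; rewrite F1n0.
have rec0 : forall i, a i = ((j.-1) ^_ i)%:R * 0 ^+ (j.-1 - i) -
     \sum_(m < i) 'C(i, m)%:R * (a m * derive1n (i - m) (@F1 R) 0).
  move=> i; rewrite (recG hj 0 (ltnSn i)) big_ord_recr /= binn subnn Fz /=.
  rewrite expr0 divr1 mul1r mulr1 addrC addrK //.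
rewrite -/(a j) -/(a j.-1) -/(a j.+1) -/(a j.+2).
have E : forall k, derive1n k (@G R j) 0 = a k by [].
clearbody a; clear P1; case: j hj a rec0 E => [//|p] _ a rec0 E /=.
simpl in rec0.
have P3 : forall k, (k < p)%N -> a k = 0.
  move=> k; elim: k {-2}k (leqnn k) => [|n IH] k kn kp.
    rewrite leqn0 in kn; move/eqP: kn kp => -> kp.
    by rewrite rec0 big_ord0 subr0 ffactn0 subn0 expr0n /= gtn_eqF // mulr0.
  rewrite rec0 big1 ?subr0.
    by rewrite expr0n /= subn_eq0 leqNgt kp /= mulr0.
  move=> m _; rewrite IH ?mul0r ?mulr0 //.
    by rewrite -ltnS (leq_trans (ltn_ord m)).
  by rewrite (ltn_trans (ltn_ord m)).
split; first by move=> k kp; rewrite E P3.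
have Z : forall c g : 'I_p -> R, \sum_(m < p) c m * (a m * g m) = 0.
  by move=> c g; rewrite big1 // => m _; rewrite P3 ?mul0r ?mulr0.
have HP : 0 < p`!%:R :> R by rewrite ltr0n fact_gt0.
have Hp : 0 <= p%:R :> R by apply: ler0n.
have ap : a p = p`!%:R.
  by rewrite rec0 Z subr0 ffactnn subnn expr0 mulr1.
have ap1 : a p.+1 = (p.+1)`!%:R / 2.
  rewrite rec0 big_ord_recr /= Z add0r ffact_small // mul0r sub0r binSn subSnn ap Fz.
  rewrite factS natrM -natr1.
  by field.
have e20 : (p.+2 - p = 2)%N by rewrite -addn2 addKn.
have e30 : (p.+3 - p = 3)%N by rewrite -addn3 addKn.
have e31 : (p.+3 - p.+1 = 2)%N by rewrite subSS e20.
have ap2 : a p.+2 = (p.+2)`!%:R / 12.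
  rewrite rec0 !big_ord_recr /= Z add0r ffact_small // mul0r sub0r.
  rewrite (Cnat R (leq_trans (leqnSn p) (leqnSn p.+1))).
  rewrite binSn e20 subSnn ap ap1 !Fz.
  rewrite !factS fact0 !natrM -!natr1.
  by field; rewrite ?gt_eqF.
have ap3 : a p.+3 = 0.
  rewrite rec0 !big_ord_recr /= Z add0r (ffact_small (leq_trans (leqnSn p.+1) (leqnSn p.+2))) mul0r sub0r.
  rewrite (Cnat R (leq_trans (leqnSn p) (leq_trans (leqnSn p.+1) (leqnSn p.+2)))).
  rewrite (Cnat R (leq_trans (leqnSn p.+1) (leqnSn p.+2))).
  rewrite binSn.
  rewrite e30 e31 subSnn ap ap1 ap2 !Fz.
  rewrite !factS fact0 !natrM -!natr1.
  field.
  by apply/andP; split; apply/negP => /eqP; lra.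
by rewrite ap ap1 ap2 ap3; repeat split.
Qed.
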